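(* Let $(A^1,B^1)$ be an $n_1\times m_1$ bimatrix game, $(A^2,B^2)$ an $n_2\times m_2$ bimatrix game, $K$ a real number with $K>|c|$ for every entry $c$ of $A^1,B^1,A^2,B^2$, and let $(A,B)$ be the sum game $(A^1,B^1)+(A^2,B^2)$ via $K$. If $(x,y)$ is a Nash equilibrium of $(A,B)$, then $(x^1,y^1)$ defined by $x^1_i=x_i/\sum_{l=1}^{n_1}x_l$ for $1\le i\le n_1$ and $y^1_j=y_j/\sum_{l=1}^{m_1}y_l$ for $1\le j\le m_1$ is well-defined and is a Nash equilibrium of $(A^1,B^1)$.
   Context: An $n\times m$ bimatrix game $(A,B)$ consists of two real $n\times m$ matrices. A mixed strategy of the row player is a probability vector $x\in\Delta_n=\{x\in\mathbb{R}^n_{\ge 0}:\sum_i x_i=1\}$, of the column player $y\in\Delta_m$; the expected payoffs are $x^TAy$ (row player) and $x^TBy$ (column player). $(x,y)$ is a Nash equilibrium if $x^TAy\ge \hat x^TAy$ for all $\hat x\in\Delta_n$ and $x^TBy\ge x^TB\hat y$ for all $\hat y\in\Delta_m$. The sum game $(A^1,B^1)+(A^2,B^2)$ via $K$ is the $(n_1+n_2)\times(m_1+m_2)$ game $(A,B)$ with $A_{ij}=A^1_{ij}$, $B_{ij}=B^1_{ij}$ if $i\le n_1,j\le m_1$; $A_{ij}=A^2_{i-n_1,j-m_1}$, $B_{ij}=B^2_{i-n_1,j-m_1}$ if $i>n_1,j>m_1$; and $A_{ij}=K$, $B_{ij}=-K$ otherwise. *)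

(* Defs.v *)
From mathcomp Require Import all_boot all_order all_algebra.
Set Implicit Arguments. Unset Strict Implicit. Unset Printing Implicit Defensive.
Import Order.TTheory GRing.Theory Num.Theory.
Local Open Scope ring_scope.

Definition mixed (R : realFieldType) (n : nat) (x : 'cV[R]_n) : Prop :=
  (forall i, 0 <= x i 0) /\ \sum_i x i 0 = 1.

Definition payoff (R : realFieldType) (n m : nat)
  (x : 'cV[R]_n) (M : 'M[R]_(n, m)) (y : 'cV[R]_m) : R :=
  (x^T *m M *m y) 0 0.

Definition nash_eq (R : realFieldType) (n m : nat)
  (A B : 'M[R]_(n, m)) (x : 'cV[R]_n) (y : 'cV[R]_m) : Prop :=
  mixed x /\ mixed y /\
  (forall xh : 'cV[R]_n, mixed xh -> payoff xh A y <= payoff x A y) /\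
  (forall yh : 'cV[R]_m, mixed yh -> payoff x B yh <= payoff x B y).

Definition sumA (R : realFieldType) (n1 m1 n2 m2 : nat)
  (A1 : 'M[R]_(n1, m1)) (A2 : 'M[R]_(n2, m2)) (K : R) : 'M[R]_(n1 + n2, m1 + m2) :=
  block_mx A1 (const_mx K) (const_mx K) A2.

Definition sumB (R : realFieldType) (n1 m1 n2 m2 : nat)
  (B1 : 'M[R]_(n1, m1)) (B2 : 'M[R]_(n2, m2)) (K : R) : 'M[R]_(n1 + n2, m1 + m2) :=
  block_mx B1 (const_mx (- K)) (const_mx (- K)) B2.

Definition restrict_norm (R : realFieldType) (n1 n2 : nat)
  (x : 'cV[R]_(n1 + n2)) : 'cV[R]_n1 :=
  \col_i (x (lshift n2 i) 0 / \sum_(l < n1) x (lshift n2 l) 0).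

(* Main.v *)
Require Import Defs.
From mathcomp Require Import all_boot all_order all_algebra.
From mathcomp Require Import ring lra.
Import Order.TTheory GRing.Theory Num.Theory.
Local Open Scope ring_scope.

Section Sec.
Variable R : realFieldType.

Definition ssum {n} (a : 'cV[R]_n) := \sum_i a i 0.

Lemma payoffE n m (a : 'cV[R]_n) (M : 'M[R]_(n,m)) b :
  payoff a M b = \sum_i a i 0 * \sum_j M i j * b j 0.
Proof.
rewrite /payoff -mulmxA mxE; apply: eq_bigr => i _; rewrite !mxE.
by [].
Qed.

Lemma payoffD1 n m (a c : 'cV[R]_n) (M : 'M[R]_(n,m)) b :
  payoff (a + c) M b = payoff a M b + payoff c M b.
Proof. by rewrite !payoffE -big_split; apply: eq_bigr => i _; rewrite mxE mulrDl. Qed.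

Lemma payoffZ1 n m k (a : 'cV[R]_n) (M : 'M[R]_(n,m)) b :
  payoff (k *: a) M b = k * payoff a M b.
Proof. by rewrite !payoffE mulr_sumr; apply: eq_bigr => i _; rewrite mxE mulrA. Qed.

Lemma payoffZ2 n m k (a : 'cV[R]_n) (M : 'M[R]_(n,m)) b :
  payoff a M (k *: b) = k * payoff a M b.
Proof. by rewrite /payoff -scalemxAr mxE. Qed.

Lemma payoff_tr n m (a : 'cV[R]_n) (M : 'M[R]_(n,m)) b :
  payoff a M b = payoff b M^T a.
Proof.
rewrite /payoff -[in LHS](trmxK (a^T *m M *m b)) [in LHS]mxE.
by rewrite !trmx_mul trmxK mulmxA.
Qed.

Lemma payoff_block n1 n2 m1 m2 (a1 : 'cV[R]_n1) (a2 : 'cV[R]_n2)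
  (b1 : 'cV[R]_m1) (b2 : 'cV[R]_m2) A B C D :
  payoff (col_mx a1 a2) (block_mx A B C D) (col_mx b1 b2) =
  payoff a1 A b1 + payoff a1 B b2 + payoff a2 C b1 + payoff a2 D b2.
Proof.
rewrite /payoff tr_col_mx mul_row_block mul_row_col !mulmxDl !mxE.
ring.
Qed.

Lemma payoff_const n m (a : 'cV[R]_n) (b : 'cV[R]_m) c :
  payoff a (const_mx c) b = c * ssum a * ssum b.
Proof.
rewrite payoffE /ssum -mulrA [c * _]mulrC -mulrA mulr_suml; apply: eq_bigr => i _.
congr (_ * _); rewrite mulr_suml; apply: eq_bigr => j _; by rewrite mxE mulrC.
Qed.

Lemma ssum_col n1 n2 (a1 : 'cV[R]_n1) (a2 : 'cV[R]_n2) :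
  ssum (col_mx a1 a2) = ssum a1 + ssum a2.
Proof.
by rewrite /ssum big_split_ord /=; congr (_ + _); apply: eq_bigr => i _;
  rewrite ?col_mxEu ?col_mxEd.
Qed.

Lemma mixed_col n1 n2 (a1 : 'cV[R]_n1) (a2 : 'cV[R]_n2) :
  mixed (col_mx a1 a2) <->
  [/\ forall i, 0 <= a1 i 0, forall i, 0 <= a2 i 0 & ssum a1 + ssum a2 = 1].
Proof.
split.
  move=> [h1 h2]; split.
  - by move=> i; have := h1 (lshift n2 i); rewrite col_mxEu.
  - by move=> i; have := h1 (rshift n1 i); rewrite col_mxEd.
  - by rewrite -ssum_col.
move=> [h1 h2 h3]; split; last by rewrite -h3 -ssum_col.
move=> i; rewrite -(splitK i); case: (split i) => k /=.
  by rewrite col_mxEu.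
by rewrite col_mxEd.
Qed.

Lemma ssum0 n : ssum (0 : 'cV[R]_n) = 0.
Proof. by rewrite /ssum big1 // => i _; rewrite mxE. Qed.

Lemma payoff0r n m (a : 'cV[R]_n) (M : 'M[R]_(n,m)) :
  payoff a M 0 = 0.
Proof. by rewrite -(scale0r (0 : 'cV[R]_m)) payoffZ2 mul0r. Qed.

Lemma payoff0l n m (b : 'cV[R]_m) (M : 'M[R]_(n,m)) :
  payoff 0 M b = 0.
Proof. by rewrite -(scale0r (0 : 'cV[R]_n)) payoffZ1 mul0r. Qed.

Lemma zero_of_S n (a : 'cV[R]_n) : (forall i, 0 <= a i 0) -> ssum a = 0 -> a = 0.
Proof.
move=> h hs; apply/matrixP => i j; rewrite (ord1 j) mxE.
by apply: (psumr_eq0P (P := predT) (F := fun i => a i 0)) => // k _.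
Qed.

Lemma strict_sum n (a f : 'I_n -> R) c :
  (forall i, 0 <= a i) -> 0 < \sum_i a i -> (forall i, f i < c) ->
  \sum_i a i * f i < c * \sum_i a i.
Proof.
move=> ha hs hf; rewrite -subr_gt0.
have -> : c * \sum_i a i - \sum_i a i * f i = \sum_i a i * (c - f i).
  by rewrite mulr_sumr -sumrB; apply: eq_bigr => i _; ring.
case: (boolP [exists i, 0 < a i]) => [/existsP [i hi]|].
  rewrite (bigD1 i) //=; apply: ltr_pwDl.
    by rewrite mulr_gt0 // subr_gt0.
  by apply: sumr_ge0 => k _; rewrite mulr_ge0 // subr_ge0 ltW.
move/existsPn => h0; exfalso; move: hs; rewrite big1 ?ltxx // => i _.
by apply/eqP; rewrite eq_le ha andbT leNgt h0.
Qed.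

Lemma strict_sum' n (a f : 'I_n -> R) c :
  (forall i, 0 <= a i) -> 0 < \sum_i a i -> (forall i, c < f i) ->
  c * \sum_i a i < \sum_i a i * f i.
Proof.
move=> ha hs hf; rewrite -ltrN2 -mulNr -sumrN.
have -> : \sum_i - (a i * f i) = \sum_i a i * (- f i).
  by apply: eq_bigr => i _; rewrite mulrN.
by apply: strict_sum => // i; rewrite ltrN2.
Qed.


Lemma ssumZ n k (a : 'cV[R]_n) : ssum (k *: a) = k * ssum a.
Proof. by rewrite /ssum mulr_sumr; apply: eq_bigr => i _; rewrite mxE. Qed.

Lemma ssumD n (a b : 'cV[R]_n) : ssum (a + b) = ssum a + ssum b.
Proof. by rewrite /ssum -big_split; apply: eq_bigr => i _; rewrite mxE. Qed.

Definition ev k : 'cV[R]_k.+1 := \col_i ((i == ord0)%:R).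

Lemma ev_ge0 k i : 0 <= ev k i 0.
Proof. by rewrite mxE ler0n. Qed.

Lemma ssum_ev k : ssum (ev k) = 1.
Proof.
rewrite /ssum (bigD1 ord0) //= big1; first by rewrite mxE eqxx addr0.
by move=> i hi; rewrite mxE (negbTE hi).
Qed.

Lemma payoff_ev k m (M : 'M[R]_(k.+1, m)) b :
  payoff (ev k) M b = \sum_j M ord0 j * b j 0.
Proof.
rewrite payoffE (bigD1 ord0) //= [X in _ + X]big1; first by rewrite addr0 mxE eqxx mul1r.
by move=> i hi; rewrite mxE (negbTE hi) mul0r.
Qed.

Lemma inner_bound n m (M : 'M[R]_(n, m)) (b : 'cV[R]_m) K :
  mixed b -> (forall i j, `|M i j| < K) ->
  forall i, -K < \sum_j M i j * b j 0 < K.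
Proof.
move=> [hb0 hb1] hM i.
have E : \sum_j M i j * b j 0 = \sum_j b j 0 * M i j.
  by apply: eq_bigr => j _; rewrite mulrC.
rewrite E; apply/andP; split.
  have := @strict_sum' _ (fun j => b j 0) (M i) (-K) hb0.
  rewrite hb1 mulr1; apply => // j.
  by have := hM i j; rewrite ltr_norml => /andP[].
have := @strict_sum _ (fun j => b j 0) (M i) K hb0.
rewrite hb1 mulr1; apply => // j.
by have := hM i j; rewrite ltr_norml => /andP[].
Qed.

Lemma mixed_ssum_ge0 n (a : 'cV[R]_n) : (forall i, 0 <= a i 0) -> 0 <= ssum a.
Proof. by move=> h; apply: sumr_ge0. Qed.

Section Game.
Variables (n1 n2 m1 m2 : nat) (M1 : 'M[R]_(n1.+1, m1.+1)) (M2 : 'M[R]_(n2.+1, m2.+1)).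
Variables (c : R) (a1 : 'cV[R]_n1.+1) (a2 : 'cV[R]_n2.+1)
  (b1 : 'cV[R]_m1.+1) (b2 : 'cV[R]_m2.+1).
Hypothesis ha : mixed (col_mx a1 a2).
Hypothesis hb : mixed (col_mx b1 b2).
Let G := block_mx M1 (const_mx c) (const_mx c) M2.
Hypothesis N : forall ah, mixed ah -> payoff ah G (col_mx b1 b2) <=
   payoff (col_mx a1 a2) G (col_mx b1 b2).

Lemma FE (u1 : 'cV[R]_n1.+1) (u2 : 'cV[R]_n2.+1) :
  payoff (col_mx u1 u2) G (col_mx b1 b2) =
  payoff u1 M1 b1 + c * ssum u1 * ssum b2 + c * ssum u2 * ssum b1 + payoff u2 M2 b2.
Proof. by rewrite /G payoff_block !payoff_const. Qed.

Lemma restrict_best : 0 < ssum a1 -> forall z, mixed z ->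
  payoff z M1 b1 <= payoff ((ssum a1)^-1 *: a1) M1 b1.
Proof.
move=> hs z [hz0 hz1].
have /mixed_col [ha1 ha2 hsum] := ha.
have hm : mixed (col_mx (ssum a1 *: z) a2).
  apply/mixed_col; split => //.
    by move=> i; rewrite mxE mulr_ge0 // ltW.
  by rewrite ssumZ /ssum hz1 mulr1.
have hz : ssum z = 1 := hz1.
have := N _ hm; rewrite !FE ssumZ payoffZ1 hz mulr1 => h.
have h2 : ssum a1 * payoff z M1 b1 <= payoff a1 M1 b1 by lra.
rewrite payoffZ1 -(mulKf (lt0r_neq0 hs) (payoff z M1 b1)).
by rewrite ler_wpM2l // invr_ge0 ltW.
Qed.

Lemma row_pos K : c = K -> (forall i j, `|M2 i j| < K) ->
  ssum b1 = 0 -> ssum a2 = 0.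
Proof.
move=> hc hM hs1.
have /mixed_col [ha1 ha2 hsa] := ha.
have /mixed_col [hb1 hb2 hsb] := hb.
have eb1 : b1 = 0 := @zero_of_S _ _ hb1 hs1.
have hsb2 : ssum b2 = 1 by lra.
have := @mixed_ssum_ge0 _ _ ha2; rewrite le0r => /orP [/eqP // | ht]; exfalso.
have hm : mixed (col_mx (a1 + ssum a2 *: ev n1) (0 : 'cV[R]_n2.+1)).
  apply/mixed_col; split.
  - by move=> i; rewrite !mxE addr_ge0 // mulr_ge0 // ?ltW // ev_ge0.
  - by move=> i; rewrite mxE.
  - by rewrite ssumD ssumZ ssum_ev ssum0; lra.
have := N _ hm; rewrite !FE eb1 !payoff0r payoff0l !ssum0 ssumD ssumZ ssum_ev hsb2 hc.
have : payoff a2 M2 b2 < K * ssum a2.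
  rewrite payoffE; apply: strict_sum => // i.
  by have /andP [] := @inner_bound _ _ M2 b2 K (conj hb2 hsb2) hM i.
lra.
Qed.

Lemma col_pos1 K : c = - K -> (forall i j, `|M2 i j| < K) ->
  ssum b1 = 0 -> ssum a1 = 0.
Proof.
move=> hc hM hs1.
have /mixed_col [ha1 ha2 hsa] := ha.
have /mixed_col [hb1 hb2 hsb] := hb.
have eb1 : b1 = 0 := @zero_of_S _ _ hb1 hs1.
have hsb2 : ssum b2 = 1 by lra.
have := @mixed_ssum_ge0 _ _ ha1; rewrite le0r => /orP [/eqP // | ht]; exfalso.
have hm : mixed (col_mx (0 : 'cV[R]_n1.+1) (a2 + ssum a1 *: ev n2)).
  apply/mixed_col; split.
  - by move=> i; rewrite mxE.
  - by move=> i; rewrite !mxE addr_ge0 // mulr_ge0 // ?ltW // ev_ge0.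
  - by rewrite ssumD ssumZ ssum_ev ssum0; lra.
have := N _ hm; rewrite !FE eb1 !payoff0r ?payoff0l !ssum0 payoffD1 payoffZ1 hsb2 hc payoff_ev.
have : ssum a1 * - K < ssum a1 * \sum_j M2 ord0 j * b2 j 0.
  rewrite ltr_pM2l //.
  by have /andP [] := @inner_bound _ _ M2 b2 K (conj hb2 hsb2) hM ord0.
lra.
Qed.

Lemma col_pos2 K : c = - K -> (forall i j, `|M1 i j| < K) ->
  ssum b2 = 0 -> ssum a2 = 0.
Proof.
move=> hc hM hs2.
have /mixed_col [ha1 ha2 hsa] := ha.
have /mixed_col [hb1 hb2 hsb] := hb.
have eb2 : b2 = 0 := @zero_of_S _ _ hb2 hs2.
have hsb1 : ssum b1 = 1 by lra.
have := @mixed_ssum_ge0 _ _ ha2; rewrite le0r => /orP [/eqP // | ht]; exfalso.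
have hm : mixed (col_mx (a1 + ssum a2 *: ev n1) (0 : 'cV[R]_n2.+1)).
  apply/mixed_col; split.
  - by move=> i; rewrite !mxE addr_ge0 // mulr_ge0 // ?ltW // ev_ge0.
  - by move=> i; rewrite mxE.
  - by rewrite ssumD ssumZ ssum_ev ssum0; lra.
have := N _ hm; rewrite !FE eb2 !payoff0r ?payoff0l !ssum0 payoffD1 payoffZ1 hsb1 hc payoff_ev.
have : ssum a2 * - K < ssum a2 * \sum_j M1 ord0 j * b1 j 0.
  rewrite ltr_pM2l //.
  by have /andP [] := @inner_bound _ _ M1 b1 K (conj hb1 hsb1) hM ord0.
lra.
Qed.

End Game.
End Sec.
Arguments ssum {R n}.
Arguments ssumZ {R n}.
Arguments mixed_ssum_ge0 {R n a}.
Arguments payoffZ2 {R n m}.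
Arguments payoff_tr {R n m}.
Arguments mixed_col {R n1 n2 a1 a2}.
Arguments row_pos {R n1 n2 m1 m2 M1 M2 c a1 a2 b1 b2}.
Arguments col_pos1 {R n1 n2 m1 m2 M1 M2 c a1 a2 b1 b2}.
Arguments col_pos2 {R n1 n2 m1 m2 M1 M2 c a1 a2 b1 b2}.
Arguments restrict_best {R n1 n2 m1 m2 M1 M2 c a1 a2 b1 b2}.

Lemma restrict_colE (R : realFieldType) n n' (a : 'cV[R]_n) (b : 'cV[R]_n') :
  restrict_norm (col_mx a b) = (ssum a)^-1 *: a.
Proof.
apply/matrixP => i j; rewrite (ord1 j) !mxE.
have -> : split (lshift n' i) = inl i := unsplitK (inl _ i).
rewrite mulrC; congr (_^-1 * _).
by rewrite /ssum; apply: eq_bigr => l _; rewrite col_mxEu.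
Qed.

Lemma sum_lshiftE (R : realFieldType) n n' (a : 'cV[R]_n) (b : 'cV[R]_n') :
  \sum_(l < n) col_mx a b (lshift n' l) 0 = ssum a.
Proof. by apply: eq_bigr => l _; rewrite col_mxEu. Qed.

Theorem theorem6 (R : realFieldType) (n1 m1 n2 m2 : nat)
  (A1 B1 : 'M[R]_(n1.+1, m1.+1)) (A2 B2 : 'M[R]_(n2.+1, m2.+1)) (K : R)
  (hK1 : forall i j, `|A1 i j| < K /\ `|B1 i j| < K)
  (hK2 : forall i j, `|A2 i j| < K /\ `|B2 i j| < K)
  (x : 'cV[R]_(n1.+1 + n2.+1)) (y : 'cV[R]_(m1.+1 + m2.+1)) :
  nash_eq (sumA A1 A2 K) (sumB B1 B2 K) x y ->
  (0 < \sum_(l < n1.+1) x (lshift n2.+1 l) 0) /\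
  (0 < \sum_(l < m1.+1) y (lshift m2.+1 l) 0) /\
  nash_eq A1 B1 (restrict_norm x) (restrict_norm y).
Proof.
rewrite -[x]vsubmxK -[y]vsubmxK.
move: (usubmx x) (dsubmx x) (usubmx y) (dsubmx y) => x1 x2 y1 y2.
rewrite !restrict_colE !sum_lshiftE.
move=> [hx [hy [hr hc]]].
have hA1 : forall i j, `|A1 i j| < K by move=> i j; case: (hK1 i j).
have hA2 : forall i j, `|A2 i j| < K by move=> i j; case: (hK2 i j).
have hB1 : forall i j, `|B1^T i j| < K by move=> i j; rewrite mxE; case: (hK1 j i).
have hB2 : forall i j, `|B2^T i j| < K by move=> i j; rewrite mxE; case: (hK2 j i).
have E : (sumB B1 B2 K)^T = block_mx B1^T (const_mx (- K)) (const_mx (- K)) B2^T.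
  by rewrite /sumB tr_block_mx !trmx_const.
have Nc : forall yh, mixed yh ->
  payoff yh (block_mx B1^T (const_mx (- K)) (const_mx (- K)) B2^T) (col_mx x1 x2) <=
  payoff (col_mx y1 y2) (block_mx B1^T (const_mx (- K)) (const_mx (- K)) B2^T) (col_mx x1 x2).
  by move=> yh hyh; rewrite -E -!payoff_tr; apply: hc.
have Nr : forall xh, mixed xh ->
  payoff xh (block_mx A1 (const_mx K) (const_mx K) A2) (col_mx y1 y2) <=
  payoff (col_mx x1 x2) (block_mx A1 (const_mx K) (const_mx K) A2) (col_mx y1 y2).
  exact: hr.
have /mixed_col [hx1 hx2 hsx] := hx.
have /mixed_col [hy1 hy2 hsy] := hy.
have rp := row_pos hx hy Nr K (erefl K) hA2.
have cp1 := col_pos1 hy hx Nc K (erefl (- K)) hB2.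
have cp2 := col_pos2 hy hx Nc K (erefl (- K)) hB1.
have hs : 0 < ssum x1.
  have := mixed_ssum_ge0 hx1; rewrite le0r => /orP [/eqP h0 | //].
  have := rp (cp1 h0); lra.
have hu : 0 < ssum y1.
  have := mixed_ssum_ge0 hy1; rewrite le0r => /orP [/eqP h0 | //].
  have := cp2 (rp h0); lra.
have mixZ : forall n (a : 'cV[R]_n), (forall i, 0 <= a i 0) -> 0 < ssum a ->
    mixed ((ssum a)^-1 *: a).
  move=> n a ha hsa; split.
    by move=> i; rewrite mxE mulr_ge0 // invr_ge0 ltW.
  by change (ssum ((ssum a)^-1 *: a) = 1); rewrite ssumZ mulVf // lt0r_neq0.
split => //; split => //; split; first exact: mixZ.
split; first exact: mixZ.
split.
  move=> xh hxh; rewrite !payoffZ2 ler_pM2l ?invr_gt0 //.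
  exact: (restrict_best hx Nr hs xh hxh).
move=> yh hyh; rewrite payoff_tr [payoff _ B1 (_ *: y1)]payoff_tr !payoffZ2.
rewrite ler_pM2l ?invr_gt0 //.
exact: (restrict_best hy Nc hu yh hyh).
Qed.
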